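(* Let $\hat B$ be the bus susceptance matrix of a connected power network with bus set $\mathcal N$, let $\mathcal T \subseteq \mathcal N$, and let $t_1 \neq t_2$ be elements of $\mathcal T$. Let $\sigma_\Gamma^2 > 0$. For $i = 1,2$: let $\theta^{(i)}$ be a random vector in $\mathbb R^{\mathcal N}$ with finite second moments and $\theta^{(i)}_{t_i} = 0$; let $S_i$ be uniformly distributed on $\mathcal T \setminus\{t_i\}$; let $\Gamma_i$ be a real random variable with mean $0$ and variance $\sigma_\Gamma^2$; assume $\theta^{(i)}, S_i, \Gamma_i$ mutually independent; and let $\hat\theta^{(i)}$ be the random vector with $\hat\theta^{(i)}_{t_i} = 0$ and $\hat B\hat\theta^{(i)} = \hat B\theta^{(i)} + \Gamma_i u^{S_i,t_i}$. Define $$\omega = \min\{(v^{s,t}_j)^2 : s,t \in \mathcal T,\ s\ne t,\ j \in \mathcal N,\ v^{s,t}_j \neq 0\},\qquad \lambda = \frac{\sigma_\Gamma^2}{|\mathcal T|-1}\,\omega .$$ Then for every bus $k \in \mathcal N$ there exists $i \in \{1,2\}$ such that the $(k,k)$ entry of the covariance matrix of $\hat\theta^{(i)}$ is at least the $(k,k)$ entry of the covariance matrix of $\theta^{(i)}$ plus $\lambda$, i.e. $\operatorname{Var}(\hat\theta^{(i)}_k) \ge \operatorname{Var}(\theta^{(i)}_k) + \lambda$.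
   Context: DC power flow model: each line $km$ has reactance $x_{km} > 0$, and $\hat B_{kk} = \sum_{km \ni k} 1/x_{km}$, $\hat B_{km} = -1/x_{km}$ for a line $km$, $\hat B_{km} = 0$ otherwise. For distinct buses $s,t$, $u^{s,t}_s = 1$, $u^{s,t}_t = -1$, $u^{s,t}_k = 0$ otherwise, and $v^{s,t}$ is the unique vector with $\hat B v^{s,t} = u^{s,t}$ and $v^{s,t}_t = 0$. *)

(* Defs.v *)
From HB Require Import structures.
From mathcomp Require Import all_boot all_order all_algebra.
From mathcomp Require Import all_classical all_reals all_analysis.

Set Implicit Arguments.
Unset Strict Implicit.
Unset Printing Implicit Defensive.

Import Order.TTheory GRing.Theory Num.Theory.

Local Open Scope classical_set_scope.
Local Open Scope ring_scope.

(* Bus susceptance matrix of a network with buses 'I_n, line relation [adj]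
   (adj k m means there is a line km) and reactances x k m. *)
Definition Bhat (R : realType) (n : nat) (adj : rel 'I_n)
    (x : 'I_n -> 'I_n -> R) : 'M[R]_n :=
  \matrix_(k, m) (if k == m then \sum_(m' | adj k m') (x k m')^-1
                  else if adj k m then - (x k m)^-1 else 0).

Definition uvec (R : realType) (n : nat) (s t : 'I_n) : 'cV[R]_n :=
  \col_k (if k == s then 1 else if k == t then -1 else 0).

(* omega = min { (v^{s,t}_j)^2 : s,t in T, s <> t, j bus, v^{s,t}_j <> 0 }
   (head of the list used as neutral element of the min-fold; the list is
   nonempty under the theorem's hypotheses). *)
Definition omega_list (R : realType) (n : nat) (T : {set 'I_n})
    (v : 'I_n -> 'I_n -> 'cV[R]_n) : seq R :=
  [seq (v p.1.1 p.1.2 p.2 ord0) ^+ 2 |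
     p <- enum [pred p : 'I_n * 'I_n * 'I_n |
                [&& p.1.1 \in T, p.1.2 \in T, p.1.1 != p.1.2 &
                    v p.1.1 p.1.2 p.2 ord0 != 0]]].

Definition omega (R : realType) (n : nat) (T : {set 'I_n})
    (v : 'I_n -> 'I_n -> 'cV[R]_n) : R :=
  let l := omega_list T v in \big[Num.min/head 0 l]_(y <- l) y.

(* Mutual independence of the random vector th (values in R^n), the random
   bus S and the real random variable G, stated on the generating pi-systems:
   measurable rectangles for th, arbitrary subsets of the finite set of buses
   for S, measurable sets for G.  Taking some of the sets to be the whole
   space gives the sub-family product rules. *)
Definition mutually_indep (d : measure_display) (Omega : measurableType d)
    (R : realType) (P : probability Omega R) (n : nat)
    (th : Omega -> 'cV[R]_n) (S : Omega -> 'I_n) (G : Omega -> R) : Prop :=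
  forall (A : 'I_n -> set R) (U : set 'I_n) (B : set R),
    (forall j, measurable (A j)) -> measurable B ->
    P ([set w | forall j, A j (th w j ord0)] `&` (S @^-1` U) `&` (G @^-1` B))
    = (P [set w | forall j, A j (th w j ord0)] * P (S @^-1` U) * P (G @^-1` B))%E.

(* Main.v *)
Require Import Defs.
From HB Require Import structures.
From mathcomp Require Import all_boot all_order all_algebra.
From mathcomp Require Import all_classical all_reals all_analysis.
From mathcomp Require Import measurable_realfun.
From mathcomp Require Import ring lra.

Set Implicit Arguments.
Unset Strict Implicit.
Unset Printing Implicit Defensive.

Import Order.TTheory GRing.Theory Num.Theory.
Local Open Scope classical_set_scope.
Local Open Scope ring_scope.

Section core.
Local Open Scope ereal_scope.
Context d (Om : measurableType d) (R : realType) (P : probability Om R).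

Lemma Lfun_meas (U : Om -> R) p : U \in Lfun P p -> measurable_fun setT U.
Proof. by case/andP; rewrite inE. Qed.

Lemma indepE (U V : Om -> R) :
  U \in Lfun P 1 -> V \in Lfun P 1 -> (U \* V)%R \in Lfun P 1 ->
  (forall B1 B2, measurable B1 -> measurable B2 ->
     P (U @^-1` B1 `&` V @^-1` B2) = P (U @^-1` B1) * P (V @^-1` B2)) ->
  'E_P[U \* V] = 'E_P[U] * 'E_P[V].
Proof.
move=> U1 V1 UV1 ind.
have mU := Lfun_meas U1; have mV := Lfun_meas V1.
pose U' : {mfun Om >-> R} := HB.pack U (isMeasurableFun.Build _ _ _ _ U mU).
pose V' : {mfun Om >-> R} := HB.pack V (isMeasurableFun.Build _ _ _ _ V mV).
have mW := measurable_fun_pair mU mV.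
pose W : {mfun Om >-> (R * R)%type} :=
  HB.pack (fun w => (U w, V w)) (isMeasurableFun.Build _ _ _ _ _ mW).
pose mu := distribution P U'.
pose nu := distribution P V'.
pose J := distribution P W.
have muJ : forall A, measurable A -> (mu \x nu) A = J A.
  apply: product_measure_unique => A B mA mB.
  rewrite /J /mu /nu /distribution /pushforward /=.
  by rewrite -ind.
have f_meas : measurable_fun setT (EFin \o (fun p : R * R => (p.1 * p.2)%R)).
  by apply/measurable_EFinP; apply: measurable_funM.
have intPUV : P.-integrable setT (EFin \o (U \* V)%R) by apply/Lfun1_integrable.
have EUV : 'E_P[U \* V] = \int[J]_p (p.1 * p.2)%R%:E.
  rewrite unlock integral_distribution //.
have EUV2 : 'E_P[U \* V] = \int[mu \x nu]_p (p.1 * p.2)%R%:E.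
  by rewrite EUV; apply: eq_measure_integral => A mA _; first [exact: (esym (muJ A mA)) | exact: (muJ A mA)].
have intJ : J.-integrable setT (fun p : R * R => (p.1 * p.2)%R%:E).
  exact: (integrable_pushforward (phi:=W)).
have intmn : (mu \x nu).-integrable setT (fun p : R * R => (p.1 * p.2)%R%:E).
  apply/integrableP; split => //.
  move/integrableP: intJ => [_]; apply: le_lt_trans.
  by rewrite le_eqVlt; apply/orP; left; apply/eqP; apply: eq_measure_integral => A mA _; first [exact: (esym (muJ A mA)) | exact: (muJ A mA)].
have mE : measurable_fun setT (EFin : R -> \bar R) by apply/measurable_EFinP.
have intU : P.-integrable setT (EFin \o U) by apply/Lfun1_integrable.
have intV : P.-integrable setT (EFin \o V) by apply/Lfun1_integrable.
have intmu : mu.-integrable setT (EFin : R -> \bar R).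
  exact: (integrable_pushforward (phi:=U')).
have intnu : nu.-integrable setT (EFin : R -> \bar R).
  exact: (integrable_pushforward (phi:=V')).
have Emu : \int[mu]_x x%:E = 'E_P[U].
  by rewrite unlock (integral_distribution (X:=U')).
have Enu : \int[nu]_x x%:E = 'E_P[V].
  by rewrite unlock (integral_distribution (X:=V')).
have EVf := expectation_fin_num V1.
have EUf := expectation_fin_num U1.
rewrite EUV2 -integral12_prod_meas1 //.
rewrite /fubini_F.
transitivity (\int[mu]_x (x%:E * (fine 'E_P[V])%:E)).
  apply: eq_integral => x _.
  under eq_integral do rewrite EFinM.
  by rewrite integralZl // Enu fineK.
by rewrite integralZr // Emu fineK.
Qed.

Lemma preimT (U : Om -> R) B : measurable_fun setT U -> measurable B ->
  measurable (U @^-1` B).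
Proof. by move=> mU mB; have := mU measurableT _ mB; rewrite setTI. Qed.

Lemma PfinE (E : set Om) : measurable E -> P E = (fine (P E))%:E.
Proof. by move=> mE; rewrite fineK // fin_num_measure. Qed.

Lemma indep_ind (U V : Om -> R) (A : set Om) :
  measurable_fun setT U -> measurable_fun setT V -> measurable A ->
  (forall B1 B2, measurable B1 -> measurable B2 ->
     P (U @^-1` B1 `&` V @^-1` B2 `&` A) = P (U @^-1` B1) * P (V @^-1` B2) * P A) ->
  forall B1 B2, measurable B1 -> measurable B2 ->
   P (U @^-1` B1 `&` (V \* \1_A)%R @^-1` B2) = P (U @^-1` B1) * P ((V \* \1_A)%R @^-1` B2).
Proof.
move=> mU mV mA H B1 B2 mB1 mB2.
have mE1 := preimT mU mB1; have mE2 := preimT mV mB2.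
have H1 : P (U @^-1` B1 `&` A) = P (U @^-1` B1) * P A.
  have := H B1 setT mB1 measurableT.
  by rewrite preimage_setT setIT probability_setT mule1.
have H2 : P (V @^-1` B2 `&` A) = P (V @^-1` B2) * P A.
  have := H setT B2 measurableT mB2.
  by rewrite preimage_setT setTI probability_setT mul1e.
have HC : P (U @^-1` B1 `&` ~` A) = P (U @^-1` B1) * P (~` A).
  have Pfin : P (U @^-1` B1) < +oo by rewrite (PfinE mE1) ltry.
  rewrite -setDE (measureD mE1 mA Pfin).
  transitivity (P (U @^-1` B1) - P (U @^-1` B1) * P A).
    by congr (_ - _); exact: H1.
  rewrite probability_setC // (PfinE mE1) (PfinE mA).
  by rewrite -EFinM -EFinB -EFinB -EFinM mulrBr mulr1.
have [B20|B20] := pselect (B2 0%R).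
- have eW : (V \* \1_A)%R @^-1` B2 = (V @^-1` B2 `&` A) `|` ~` A.
    apply/seteqP; split => w /=; rewrite indicE;
      case: (pselect (A w)) => wA;
      rewrite ?(mem_set wA) ?(memNset wA) ?mulr1 ?mulr0.
    - by move=> h; left.
    - by move=> h; right.
    - by case => [[]|].
    - by move=> _.
  have eL : U @^-1` B1 `&` (V \* \1_A)%R @^-1` B2 =
      (U @^-1` B1 `&` V @^-1` B2 `&` A) `|` (U @^-1` B1 `&` ~` A).
    by rewrite eW setIUr setIA.
  have mEA : measurable (V @^-1` B2 `&` A) by exact: measurableI.
  have m1 : measurable (U @^-1` B1 `&` V @^-1` B2 `&` A).
    by apply: measurableI => //; exact: measurableI.
  have m2 : measurable (U @^-1` B1 `&` ~` A).
    by apply: measurableI => //; exact: measurableC.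
  have d12 : (U @^-1` B1 `&` V @^-1` B2 `&` A) `&` (U @^-1` B1 `&` ~` A) = set0.
    by rewrite setIACA setICr !setI0.
  have d34 : (V @^-1` B2 `&` A) `&` ~` A = set0.
    by rewrite -setIA setICr setI0.
  rewrite eL eW (measureU P m1 m2 d12) (measureU P mEA (measurableC mA) d34).
  transitivity (P (U @^-1` B1) * P (V @^-1` B2) * P A + P (U @^-1` B1) * P (~` A)).
    by congr (_ + _); [exact: H | exact: HC].
  transitivity (P (U @^-1` B1) * (P (V @^-1` B2) * P A + P (~` A))); last first.
    by congr (_ * (_ + _)); exact/esym/H2.
  rewrite (PfinE mE1) (PfinE mE2) (PfinE mA) (PfinE (measurableC mA)).
  by rewrite -!EFinM -!EFinD -?EFinM; congr EFin; ring.
- have eW : (V \* \1_A)%R @^-1` B2 = V @^-1` B2 `&` A.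
    apply/seteqP; split => w /=; rewrite indicE;
      case: (pselect (A w)) => wA;
      rewrite ?(mem_set wA) ?(memNset wA) ?mulr1 ?mulr0 //; try by case.
  rewrite eW setIA.
  transitivity (P (U @^-1` B1) * P (V @^-1` B2) * P A); first exact: H.
  rewrite -muleA; congr (_ * _); exact/esym/H2.
Qed.


Lemma L2_dom (f g : Om -> R) : measurable_fun setT f -> g \in Lfun P 2%:E ->
  (forall w, `|f w| <= `|g w|)%R -> f \in Lfun P 2%:E.
Proof.
move=> mf g2 fg.
have mg := Lfun_meas g2.
rewrite inE; apply/andP; split; first by rewrite inE.
rewrite inE /= /finite_norm unlock /Lnorm; apply: poweR_lty.
have r1 : (1 <= 2 :> R)%R by rewrite ler1n.
have /integrableP[_ ig] := Lfun_integrable r1 g2.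
apply: le_lt_trans ig.
have mp : forall h : Om -> R, measurable_fun setT h ->
    measurable_fun setT (fun x => (`|h x| `^ 2)%:E).
  move=> h mh; apply/measurable_EFinP.
  by apply: (measurableT_comp (measurable_powR _)) => //; exact: measurableT_comp.
rewrite (eq_integral (fun x => (`|f x| `^ 2)%:E)); last first.
  by move=> x _.
apply: ge0_le_integral => //.
- exact: mp.
- by apply: measurableT_comp => //; exact: mp.
- move=> x _; rewrite gee0_abs ?lee_fin ?powR_ge0 //.
  by rewrite ge0_ler_powR // nnegrE.
Qed.


Lemma expect_sum (I : finType) (F : I -> Om -> R) :
  (forall i, F i \in Lfun P 1) ->
  'E_P[(\sum_i F i)%R] = \sum_i 'E_P[F i] /\ (\sum_i F i)%R \in Lfun P 1.
Proof.
move=> F1.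
apply: (big_ind2 (fun g e => 'E_P[g] = e /\ g \in Lfun P 1)).
- split; last exact: rpred0.
  by rewrite (_ : 0%R = cst 0%R) // expectation_cst.
- move=> g1 e1 g2 e2 [<- h1] [<- h2]; split; last exact: rpredD.
  exact: expectationD.
- by move=> i _; split.
Qed.

Lemma Pfin1 : P setT \is a fin_num.
Proof. exact: fin_num_measure. Qed.

Lemma L21 (f : Om -> R) : f \in Lfun P 2%:E -> f \in Lfun P 1.
Proof. exact: (Lfun_subset12 Pfin1). Qed.


End core.

Section vm.
Local Open Scope ereal_scope.
Context d (Om : measurableType d) (R : realType) (P : probability Om R).
Lemma var_main (n : nat) (X G : Om -> R) (S : Om -> 'I_n) (f p : 'I_n -> R)
    (sigma2 : R) :
  X \in Lfun P 2%:E -> G \in Lfun P 2%:E -> 'E_P[G] = 0 -> 'V_P[G] = sigma2%:E ->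
  (forall s, measurable (S @^-1` [set s])) ->
  (forall s, P (S @^-1` [set s]) = (p s)%:E) ->
  (forall s B1 B2, measurable B1 -> measurable B2 ->
     P (X @^-1` B1 `&` G @^-1` B2 `&` S @^-1` [set s]) =
     P (X @^-1` B1) * P (G @^-1` B2) * P (S @^-1` [set s])) ->
  'V_P[(X \+ (fun w => G w * f (S w)))%R] =
    'V_P[X] + (sigma2 * \sum_s f s ^+ 2 * p s)%:E.
Proof.
move=> X2 G2 EG VG mA PA H.
have mX := Lfun_meas X2; have mG := Lfun_meas G2.
pose A s := S @^-1` [set s].
pose Z s := (G \* (\1_(A s) : Om -> R))%R.
pose W s := (cst 1%R \* (\1_(A s) : Om -> R))%R.
have mZ s : measurable_fun setT (Z s).
  by apply: measurable_funM => //; apply/measurable_indicP; exact: mA.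
have mW s : measurable_fun setT (W s).
  by apply: measurable_funM => //; apply/measurable_indicP; exact: mA.
have Z2 s : Z s \in Lfun P 2%:E.
  apply: (L2_dom (mZ s) G2) => w; rewrite /Z /= indicE normrM.
  by case: (_ \in _); rewrite ?normr1 ?normr0 ?mulr1 ?mulr0.
have W2 s : W s \in Lfun P 2%:E.
  apply: (L2_dom (mW s) (Lfun_cst P 1%R 2)) => w; rewrite /W /= indicE normrM.
  by case: (_ \in _); rewrite ?normr1 ?normr0 ?mulr1 ?mulr0.
have X1 := L21 X2; have G1 := L21 G2.
have HG (s : 'I_n) (C B2 : set R) : measurable C -> measurable B2 ->
    P (G @^-1` C `&` (cst 1%R) @^-1` B2 `&` A s) =
    P (G @^-1` C) * P ((cst 1%R) @^-1` B2) * P (A s).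
  move=> mC mB2; have [B1|nB1] := pselect (B2 1%R).
  - have -> : (cst 1%R) @^-1` B2 = setT :> set Om by apply/seteqP; split.
    rewrite setIT probability_setT mule1.
    have := H s setT C measurableT mC.
    by rewrite preimage_setT setTI probability_setT mul1e.
  - have -> : (cst 1%R) @^-1` B2 = set0 :> set Om by apply/seteqP; split.
    by rewrite setI0 set0I measure0 mule0 mul0e.
have EZ s : 'E_P[Z s] = 0.
  have -> : Z s = (G \* W s)%R by apply/funext => w; rewrite /Z /W /= mul1r.
  rewrite indepE //.
  - by rewrite EG mul0e.
  - exact: L21.
  - exact: Lfun2_mul_Lfun1.
  - apply: indep_ind => //; first exact: mA.
    by move=> B1 B2 mB1 mB2; apply: HG.
have EXZ s : 'E_P[X \* Z s] = 0.
  rewrite indepE //.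
  - by rewrite EZ mule0.
  - exact: L21.
  - exact: Lfun2_mul_Lfun1.
  - apply: indep_ind => //; first exact: mA.
    by move=> B1 B2 mB1 mB2; apply: H.
have EGG : 'E_P[G \* G] = sigma2%:E.
  have := varianceE G2; rewrite VG EG.
  have -> : (G ^+ 2)%R = (G \* G)%R by apply/funext => w; rewrite /= expr2.
  have -> : (0 : \bar R) ^+ 2 = 0 by rewrite /= mule0.
  by rewrite sube0 => ->.
have EW s : 'E_P[W s] = (p s)%:E.
  have -> : W s = \1_(A s) by apply/funext => w; rewrite /W /= mul1r.
  by rewrite expectation_indic //; [exact: PA | exact: mA].
have EGZ s : 'E_P[G \* Z s] = (sigma2 * p s)%:E.
  have e : (G \* Z s = (G \* G) \* W s)%R.
    by apply/funext => w; rewrite /Z /W /= mul1r mulrA.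
  rewrite e indepE //.
  - by rewrite EGG EW EFinM.
  - exact: Lfun2_mul_Lfun1.
  - exact: L21.
  - by rewrite -e; exact: Lfun2_mul_Lfun1.
  - apply: indep_ind => //; first exact: measurable_funM.
      exact: mA.
    move=> B1 B2 mB1 mB2.
    have msq : measurable ((fun x : R => x * x)%R @^-1` B1).
      by apply: preimT => //; exact: measurable_funM.
    exact: (HG s _ B2 msq mB2).
pose Y := (fun w => G w * f (S w))%R.
have indS w s : (\1_(A s) : Om -> R) w = (S w == s)%:R.
  rewrite indicE; case: eqP => [<-|ne]; first by rewrite mem_set.
  by rewrite memNset.
have sumS (h : 'I_n -> R) w : (\sum_s h s * (S w == s)%:R)%R = h (S w).
  rewrite (bigD1 (S w)) //= eqxx mulr1 big1 ?addr0 // => s ne.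
  by rewrite eq_sym (negbTE ne) mulr0.
have hY : Y = (\sum_s (f s \o* Z s))%R.
  apply/funext => w; rewrite fct_sumE /Y /=.
  rewrite -(sumS (fun s => G w * f s)%R); apply: eq_bigr => s _.
  by rewrite /Z /= indS -!mulrA [(f s * _)%R]mulrC.
have hY2 : (Y ^+ 2 = \sum_s ((f s ^+ 2) \o* (G \* Z s)))%R.
  apply/funext => w; rewrite fct_sumE /Y /=.
  transitivity ((G w * f (S w)) ^+ 2)%R; first by rewrite !expr2.
  rewrite -(sumS (fun s => (G w * f s) ^+ 2)%R); apply: eq_bigr => s _.
  rewrite /Z /= indS expr2.
  by case: (S w == s); rewrite /= ?mulr1 ?mulr0 ?mul0r //; ring.
have hXY : (X * Y = \sum_s (f s \o* (X \* Z s)))%R.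
  apply/funext => w; rewrite fct_sumE /Y /=.
  transitivity (X w * (G w * f (S w)))%R; first by [].
  rewrite -(sumS (fun s => X w * (G w * f s))%R); apply: eq_bigr => s _.
  by rewrite /Z /= indS; case: (S w == s); rewrite /= ?mulr1 ?mulr0 ?mul0r //; ring.
have r1 : (1 <= 2 :> R)%R by rewrite ler1n.
have Y2 : Y \in Lfun P 2%:E.
  rewrite hY; apply: rpred_sum => s _; exact: Lfun_scale.
have ZL1 s : Z s \in Lfun P 1 by exact: L21.
have XZ1 s : (X \* Z s)%R \in Lfun P 1 by exact: Lfun2_mul_Lfun1.
have GZ1 s : (G \* Z s)%R \in Lfun P 1 by exact: Lfun2_mul_Lfun1.
have EY : 'E_P[Y] = 0.
  rewrite hY (expect_sum (F := fun s => f s \o* Z s)%R _).1; last first.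
    by move=> s; apply: Lfun_scale.
  by rewrite big1 // => s _; rewrite expectationZl // EZ mule0.
have EXY : 'E_P[X * Y] = 0.
  rewrite hXY (expect_sum (F := fun s => f s \o* (X \* Z s))%R _).1; last first.
    by move=> s; apply: Lfun_scale.
  by rewrite big1 // => s _; rewrite expectationZl // EXZ mule0.
have EY2 : 'E_P[Y ^+ 2] = (sigma2 * \sum_s f s ^+ 2 * p s)%:E.
  rewrite hY2 (expect_sum (F := fun s => f s ^+ 2 \o* (G \* Z s))%R _).1; last first.
    by move=> s; apply: Lfun_scale.
  under eq_bigr do rewrite expectationZl // EGZ -EFinM.
  rewrite sumEFin; congr EFin; rewrite mulr_sumr; apply: eq_bigr => s _.
  by rewrite mulrCA mulrA.
have cov : covariance P X Y = 0.
  rewrite covarianceE //; first by rewrite EXY EY mule0 sube0.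
  - exact: L21.
  - exact: Lfun2_mul_Lfun1.
rewrite -/Y varianceD // cov mule0 adde0 (varianceE Y2) EY2 EY.
have -> : (0 : \bar R) ^+ 2 = 0 by rewrite /= mule0.
by rewrite sube0.
Qed.

End vm.

Section la.
Variables (R : realType) (n : nat) (adj : rel 'I_n) (x : 'I_n -> 'I_n -> R).
Hypotheses (adj_sym : symmetric adj) (adj_irr : irreflexive adj)
  (x_sym : forall k m, x k m = x m k)
  (x_pos : forall k m, adj k m -> 0 < x k m)
  (connected : forall k m, connect adj k m).

Lemma Bz (z : 'cV[R]_n) m :
  (Bhat adj x *m z) m 0 = \sum_(m' | adj m m') (z m 0 - z m' 0) / x m m'.
Proof.
rewrite !mxE (bigD1 m) //= mxE eqxx.
have -> : \sum_(j | j != m) Bhat adj x m j * z j 0 =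
          \sum_(j | adj m j) - (x m j)^-1 * z j 0.
  rewrite (eq_bigr (fun j => if adj m j then - (x m j)^-1 * z j 0 else 0)); last first.
    move=> j ne; rewrite mxE eq_sym (negbTE ne); case: (adj m j) => //.
    by rewrite mul0r.
  rewrite -big_mkcondr /=; apply: eq_bigl => j.
  case aj: (adj m j); rewrite ?andbF ?andbT //.
  by apply/eqP => e; move: aj; rewrite e adj_irr.
rewrite mulr_suml -big_split /=; apply: eq_bigr => j _.
by rewrite mulrBl mulNr; congr (_ - _); exact: mulrC.
Qed.

Lemma colsum (z : 'cV[R]_n) : \sum_m (Bhat adj x *m z) m 0 = 0.
Proof.
under eq_bigr do rewrite Bz.
set S := \sum_m _.
suff : S = - S by move=> h; lra.
rewrite {1}/S.
under eq_bigr do rewrite big_mkcond /=.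
rewrite exchange_big /= /S -sumrN; apply: eq_bigr => m _ /=.
rewrite -sumrN [RHS]big_mkcond; apply: eq_bigr => m' _ /=.
rewrite (adj_sym m' m); case: (adj m m') => //=.
by rewrite x_sym -mulNr opprB.
Qed.

Lemma spread (z : 'cV[R]_n) k0 :
  (forall m, z m 0 <= z k0 0) ->
  (forall m, z m 0 = z k0 0 -> (Bhat adj x *m z) m 0 <= 0) ->
  forall m, z m 0 = z k0 0.
Proof.
move=> zmax hB.
have cl a b : adj a b -> z a 0 = z k0 0 -> z b 0 = z k0 0.
  move=> ab za.
  have ge0 : forall m', adj a m' -> 0 <= (z a 0 - z m' 0) / x a m'.
    by move=> m' am'; rewrite divr_ge0 // ?subr_ge0 ?za ?zmax // ltW // x_pos.
  have s0 : \sum_(m' | adj a m') (z a 0 - z m' 0) / x a m' = 0.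
    apply/eqP; rewrite eq_le -Bz hB // andTb Bz; exact: sumr_ge0.
  have := psumr_eq0P ge0 s0 ab.
  move/eqP; rewrite mulf_eq0 invr_eq0 (gt_eqF (x_pos ab)) orbF subr_eq0.
  by move/eqP => <-.
have gen : forall p a, z a 0 = z k0 0 -> path adj a p -> z (last a p) 0 = z k0 0.
  elim => [|b p IH] a za //= /andP[ab pp]; exact: IH (cl a b ab za) pp.
move=> m; have /connectP [p pp ->] := connected k0 m.
exact: gen.
Qed.

Lemma argmax_ex (F : 'I_n -> R) (m0 : 'I_n) : exists k0, forall m, F m <= F k0.
Proof.
have [k0 _ hk] := @arg_maxP _ R 'I_n m0 xpredT F isT.
by exists k0 => m; exact: hk.
Qed.

Lemma kern (z : 'cV[R]_n) : Bhat adj x *m z = 0 -> forall m m', z m 0 = z m' 0.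
Proof.
move=> Bz0 m m'.
have [k0 hk] := argmax_ex (fun i => z i 0) m.
have h0 : forall i, z i 0 = z k0 0 -> (Bhat adj x *m z) i 0 <= 0.
  by move=> i _; rewrite Bz0 mxE.
by rewrite (spread hk h0 m) (spread hk h0 m').
Qed.

Lemma kern0 (z : 'cV[R]_n) t : Bhat adj x *m z = 0 -> z t 0 = 0 -> z = 0.
Proof.
move=> Bz0 zt; apply/matrixP => i j; rewrite (ord1 j) mxE.
by rewrite (kern Bz0 i t).
Qed.

Lemma uvecE (s t m : 'I_n) : uvec R s t m 0 = if m == s then 1 else if m == t then -1 else 0.
Proof. by rewrite mxE. Qed.

Lemma max_le (z : 'cV[R]_n) w0 :
  (forall m, m != w0 -> (Bhat adj x *m z) m 0 <= 0) -> z w0 0 = 0 ->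
  forall m, z m 0 <= 0.
Proof.
move=> hB zw m.
have [k1 hk] := argmax_ex (fun i => z i 0) m.
have [le0|gt0] := leP (z k1 0) 0; first exact: le_trans (hk m) le0.
have h0 : forall i, z i 0 = z k1 0 -> (Bhat adj x *m z) i 0 <= 0.
  move=> i e; apply: hB; apply/eqP => iw; move: e; rewrite iw zw => e.
  by move: gt0; rewrite -e ltxx.
have := spread hk h0 w0; rewrite zw => e.
by move: gt0; rewrite -e ltxx.
Qed.


Variable v : 'I_n -> 'I_n -> 'cV[R]_n.
Hypotheses (v_sol : forall s t, s != t -> Bhat adj x *m v s t = uvec R s t)
  (v_t : forall s t, s != t -> v s t t 0 = 0).

Lemma vnz t0 t1 : t0 != t1 -> forall k, v t0 t1 k 0 != 0 \/ v t1 t0 k 0 != 0.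
Proof.
move=> ne k.
set a := v t0 t1; set b := v t1 t0.
have ne' : t1 != t0 by rewrite eq_sym.
have Ba : Bhat adj x *m a = uvec R t0 t1 := v_sol ne.
have Bb : Bhat adj x *m b = uvec R t1 t0 := v_sol ne'.
have at1 : a t1 0 = 0 := v_t ne.
have bt0 : b t0 0 = 0 := v_t ne'.
case: (boolP (a k 0 != 0)) => [h|]; first by left.
case: (boolP (b k 0 != 0)) => [h|]; first by right.
rewrite !negbK => /eqP bk /eqP ak; exfalso.
have Bab : Bhat adj x *m (a + b) = 0.
  rewrite mulmxDr Ba Bb; apply/matrixP => i j; rewrite (ord1 j) !mxE.
  case: (eqVneq i t0) => [->|it0]; first by rewrite (negbTE ne) addrN.
  by case: (i == t1); rewrite ?addNr ?addr0.
have bm m : b m 0 = - a m 0.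
  have := kern Bab m k; rewrite !mxE ak bk addr0 => e; lra.
have at0 : a t0 0 = 0 by have := bm t0; rewrite bt0 => e; lra.
have ale : forall m, a m 0 <= 0.
  apply: (max_le (w0 := t0)) => // m mt0.
  rewrite Ba uvecE (negbTE mt0); case: ifP => _ //; lra.
have ble : forall m, b m 0 <= 0.
  apply: (max_le (w0 := t1)); last by rewrite bm at1 oppr0.
  move=> m mt1.
  rewrite Bb uvecE (negbTE mt1); case: ifP => _ //; lra.
have a0 m : a m 0 = 0 by have := ale m; have := ble m; rewrite bm => h1 h2; lra.
have := congr1 (fun M : 'cV[R]_n => M t0 0) Ba; rewrite /= Bz uvecE eqxx big1.
  by move/eqP; rewrite eq_sym oner_eq0.
by move=> m' _; rewrite !a0 subrr mul0r.
Qed.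

Lemma decomp (th thh : 'cV[R]_n) (g : R) (s t : 'I_n) :
  Bhat adj x *m thh = Bhat adj x *m th + g *: uvec R s t ->
  thh t 0 = 0 -> th t 0 = 0 ->
  forall k, thh k 0 = th k 0 + g * v s t k 0.
Proof.
move=> eq ht tt k.
case: (eqVneq s t) => [est|nst].
- subst s.
  have e2 : Bhat adj x *m (thh - th) = g *: uvec R t t.
    by rewrite mulmxBr eq addrAC subrr add0r.
  have g0 : g = 0.
    have := colsum (thh - th); rewrite e2.
    under eq_bigr do rewrite mxE uvecE.
    rewrite -mulr_sumr (bigD1 t) //= eqxx big1 ?addr0 ?mulr1 // => m mt.
    by rewrite (negbTE mt).
  have e3 : Bhat adj x *m (thh - th) = 0 by rewrite e2 g0 scale0r.
  have := kern0 e3 (t := t); rewrite !mxE ht tt subrr => /(_ erefl) /matrixP /(_ k 0).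
  by rewrite !mxE g0 mul0r addr0 => /eqP; rewrite subr_eq0 => /eqP.
- have e2 : Bhat adj x *m (thh - th - g *: v s t) = 0.
    by rewrite !mulmxBr eq -scalemxAr v_sol // [X in X - _ - _]addrC addrK subrr.
  have := kern0 e2 (t := t); rewrite !mxE ht tt v_t // mulr0 !subrr.
  move=> /(_ erefl) /matrixP /(_ k 0); rewrite !mxE => e; lra.
Qed.

End la.

Lemma bigmin_le (R : realType) (l : seq R) y : y \in l ->
  \big[Num.min/head 0 l]_(z <- l) z <= y.
Proof.
move: (head 0 l) => x0; elim: l => [//|a l IH].
rewrite inE big_cons ge_min => /orP[/eqP ->|yl]; first by rewrite lexx.
by rewrite IH ?orbT.
Qed.

Unset Implicit Arguments.

Theorem lemma9 (R : realType) (n : nat) (adj : rel 'I_n)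
  (x : 'I_n -> 'I_n -> R)
  (adj_sym : symmetric adj) (adj_irr : irreflexive adj)
  (x_sym : forall k m, x k m = x m k)
  (x_pos : forall k m, adj k m -> 0 < x k m)
  (connected : forall k m, connect adj k m)
  (v : 'I_n -> 'I_n -> 'cV[R]_n)
  (v_sol : forall s t, s != t -> Bhat adj x *m v s t = uvec R s t)
  (v_t : forall s t, s != t -> v s t t ord0 = 0)
  (T : {set 'I_n}) (t : 'I_2 -> 'I_n)
  (tT : forall i, t i \in T) (t12 : t 0 != t 1)
  (sigma2 : R) (sigma2_pos : 0 < sigma2)
  (d : measure_display) (Omega : measurableType d) (P : probability Omega R)
  (theta : 'I_2 -> Omega -> 'cV[R]_n)
  (theta_L2 : forall i j, (fun w => theta i w j ord0) \in Lfun P 2%:E)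
  (theta_t : forall i w, theta i w (t i) ord0 = 0)
  (S : 'I_2 -> Omega -> 'I_n)
  (S_meas : forall i s, measurable (S i @^-1` [set s]))
  (S_unif : forall i s, P (S i @^-1` [set s]) =
     (if s \in T :\ t i then ((#|T| - 1)%:R^-1)%:E else 0%E))
  (Gamma : 'I_2 -> Omega -> R)
  (Gamma_L2 : forall i, Gamma i \in Lfun P 2%:E)
  (Gamma_mean : forall i, ('E_P[Gamma i] = 0)%E)
  (Gamma_var : forall i, 'V_P[Gamma i] = sigma2%:E)
  (indep : forall i, mutually_indep P (theta i) (S i) (Gamma i))
  (thetahat : 'I_2 -> Omega -> 'cV[R]_n)
  (thetahat_t : forall i w, thetahat i w (t i) ord0 = 0)
  (thetahat_eq : forall i w, Bhat adj x *m thetahat i w =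
     Bhat adj x *m theta i w + Gamma i w *: uvec R (S i w) (t i)) :
  let lambda := sigma2 / (#|T| - 1)%:R * omega T v in
  forall k : 'I_n, exists i : 'I_2,
    ('V_P[fun w => thetahat i w k ord0] >=
     'V_P[fun w => theta i w k ord0] + lambda%:E)%E.
Proof.
move=> lambda k.
suff key : forall i s, s \in T :\ t i -> v s (t i) k ord0 != 0 ->
  ('V_P[fun w => thetahat i w k ord0] >=
     'V_P[fun w => theta i w k ord0] + lambda%:E)%E.
  have [h|h] := vnz adj_irr x_pos connected v_sol v_t t12 k.
  - exists 1; apply: (key 1 (t 0)) => //.
    by rewrite in_setD1 t12 tT.
  - exists 0; apply: (key 0 (t 1)) => //.
    by rewrite in_setD1 eq_sym t12 tT.
move=> i s sT vs0.
pose X := fun w => theta i w k ord0.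
pose f := fun s' => v s' (t i) k ord0.
pose c : R := (#|T| - 1)%:R^-1.
pose p := fun s' => if s' \in T :\ t i then c else 0.
have eq : (fun w => thetahat i w k ord0) =
          (X \+ (fun w => Gamma i w * f (S i w)))%R.
  apply/funext => w.
  exact: (decomp adj_sym adj_irr x_sym x_pos connected v_sol v_t
            (thetahat_eq i w) (thetahat_t i w) (theta_t i w) k).
rewrite eq (@var_main _ _ _ P n X (Gamma i) (S i) f p sigma2) //; last 3 first.
- exact: theta_L2.
- by move=> s0; rewrite S_unif /p; case: ifP.
- move=> s0 B1 B2 mB1 mB2.
  pose Aj := fun j : 'I_n => if j == k then B1 else setT.
  have mAj : forall j, measurable (Aj j) by move=> j; rewrite /Aj; case: ifP.
  have eR : [set w | forall j, Aj j (theta i w j ord0)] = X @^-1` B1.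
    apply/seteqP; split => w /=.
      by move/(_ k); rewrite /Aj eqxx.
    by move=> h j; rewrite /Aj; case: eqP => [->|].
  have := indep i Aj [set s0] B2 mAj mB2.
  rewrite eR => h.
  transitivity (P (X @^-1` B1 `&` S i @^-1` [set s0] `&` Gamma i @^-1` B2)).
    by congr (P _); rewrite setIAC.
  by rewrite h muleAC.
rewrite -/X leeD2l //.
rewrite lee_fin.
have c0 : 0 <= c by rewrite invr_ge0 ler0n.
have p0 : forall s', 0 <= p s' by move=> s'; rewrite /p; case: ifP.
have om : omega T v <= f s ^+ 2.
  rewrite /omega; apply: bigmin_le; rewrite /omega_list.
  apply/mapP; exists (s, t i, k) => //.
  rewrite mem_enum inE /= vs0 tT andbT.
  by move: sT; rewrite in_setD1 => /andP[-> ->].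
have sum_ge : f s ^+ 2 * c <= \sum_s0 f s0 ^+ 2 * p s0.
  rewrite (bigD1 s) //= {1}/p sT lerDl.
  by apply: sumr_ge0 => s' _; apply: mulr_ge0; [exact: sqr_ge0 | exact: p0].
have sc : 0 <= sigma2 * c by apply: mulr_ge0 => //; exact: ltW.
apply: (le_trans (y := sigma2 * (f s ^+ 2 * c))).
  rewrite /lambda -/c; nra.
by apply: ler_wpM2l => //; exact: ltW.
Qed.
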